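(* Every graph $G$ with $v(G) \geq 3$ vertices satisfies $\tau_4(G) \leq v(G) - 3$ in the $K_4$-bootstrap percolation process. In other words, for each $t \geq 1$, the graphs in the family $\mathcal H_t$ (for $r=4$, which have $t+3$ vertices and saturation time $t$) are vertex-minimal among graphs $G$ with $\tau_4(G) = t$.
   Context: $K_4$-bootstrap percolation: for a graph $G$ on vertex set $[n]$, set $G_0 := G$ and $G_{t+1} := G_t \cup \{e : \exists$ a copy $H$ of $K_4$ with $e \in H \subseteq G_t \cup \{e\}\}$; the saturation time is $\tau_4(G) := \min\{t \geq 0 : G_t = \bigcup_s G_s\}$. The family $\mathcal H_t$ (for $r=4$): start with a triangle (body) on $V_0$ and a fixed vertex $v_0 \in V_0$; $\mathcal H_1 = \{K_4 - e\}$, obtained by adding a vertex $v_1$ adjacent to $v_0$ and one other body vertex; for $t \geq 2$, $H_t \in \mathcal H_t$ is obtained from some $H_{t-1} \in \mathcal H_{t-1}$ (on $V_{t-1}$) by adding a new vertex $v_t$ with exactly $2$ neighbours in $V_{t-1}$, one of which is $v_{t-1}$ and the other of which is not a neighbour of $v_{t-1}$. *)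

(* Defs.v *)
From mathcomp Require Import all_boot.
Set Implicit Arguments. Unset Strict Implicit. Unset Printing Implicit Defensive.

Definition simple_graph (n : nat) (G : rel 'I_n) : Prop :=
  (forall x y, G x y = G y x) /\ (forall x, G x x = false).

Definition k4_step (n : nat) (G : rel 'I_n) : rel 'I_n :=
  fun x y =>
    G x y ||
    ((x != y) &&
     [exists a, [exists b,
        [&& a != x, a != y, b != x, b != y, a != b,
            G x a, G x b, G y a, G y b & G a b]]]).

Definition k4_process (n : nat) (G : rel 'I_n) (t : nat) : rel 'I_n :=
  iter t (@k4_step n) G.

Definition k4_closure (n : nat) (G : rel 'I_n) (x y : 'I_n) : Prop :=
  exists s, k4_process G s x y.

Definition k4_saturated_at (n : nat) (G : rel 'I_n) (t : nat) : Prop :=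
  forall x y, k4_process G t x y <-> k4_closure G x y.

(* Main.v *)
Require Import Defs.
From mathcomp Require Import all_boot.
From mathcomp Require Import zify.

Set Implicit Arguments. Unset Strict Implicit. Unset Printing Implicit Defensive.

Section K4.
Variable n : nat.
Implicit Types (H : rel 'I_n) (Q S : {set 'I_n}).

Definition clique H Q := forall p q, p \in Q -> q \in Q -> p != q -> H p q.
Definition attached H Q w : bool :=
  (w \in Q) || [exists p, [exists q, [&& p \in Q, q \in Q, p != q, H w p & H w q]]].

Lemma attachedI H Q w p q : p \in Q -> q \in Q -> p != q -> H w p -> H w q ->
  attached H Q w.
Proof.
move=> pQ qQ pq wp wq; apply/orP; right; apply/existsP; exists p; apply/existsP; exists q.
by rewrite pQ qQ pq wp wq.
Qed.

Lemma step_intro H x y a b : x != y -> a != x -> a != y -> b != x -> b != y -> a != b ->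
  H x a -> H x b -> H y a -> H y b -> H a b -> k4_step H x y.
Proof.
move=> h0 h1 h2 h3 h4 h5 h6 h7 h8 h9 h10; rewrite /k4_step; apply/orP; right.
rewrite h0 /=; apply/existsP; exists a; apply/existsP; exists b.
by rewrite h1 h2 h3 h4 h5 h6 h7 h8 h9 h10.
Qed.

Lemma step_elim H x y : k4_step H x y -> H x y \/
  (x != y /\ exists a b, [/\ a != x, a != y, b != x, b != y & a != b] /\
      [/\ H x a, H x b, H y a, H y b & H a b]).
Proof.
rewrite /k4_step => /orP[->|/andP[xy /existsP[a /existsP[b]]]]; first by left.
case/and5P=> h1 h2 h3 h4 /and5P[h5 h6 h7 h8 /andP[h9 h10]].
by right; split=> //; exists a, b; split; split.
Qed.

Lemma step_incl H x y : H x y -> k4_step H x y.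
Proof. by rewrite /k4_step => ->. Qed.

Lemma step_mono H H' : (forall x y, H x y -> H' x y) ->
  forall x y, k4_step H x y -> k4_step H' x y.
Proof.
move=> sub x y /step_elim[/sub/step_incl //|[xy [a [b [[h1 h2 h3 h4 h5] [h6 h7 h8 h9 h10]]]]]].
by apply: (step_intro (a:=a) (b:=b)) => //; apply: sub.
Qed.

Lemma step_sym H : (forall x y, H x y = H y x) ->
  forall x y, k4_step H x y = k4_step H y x.
Proof.
move=> sH.
suff one : forall x y, k4_step H x y -> k4_step H y x.
  by move=> x y; apply/idP/idP; apply: one.
move=> x y /step_elim[hxy|[xy [a [b [[h1 h2 h3 h4 h5] [h6 h7 h8 h9 h10]]]]]].
  by apply: step_incl; rewrite sH.
by apply: (step_intro (a:=a) (b:=b)) => //; rewrite eq_sym.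
Qed.

Lemma step_irr H : (forall x, H x x = false) -> forall x, k4_step H x x = false.
Proof.
move=> iH x; apply/negbTE/negP => /step_elim[|[]]; first by rewrite iH.
by rewrite eqxx.
Qed.

Lemma attach_join H Q w q : (forall x, H x x = false) -> (forall x y, H x y = H y x) ->
  clique H Q -> attached H Q w -> q \in Q -> w != q -> k4_step H w q.
Proof.
move=> iH sH cQ /orP[wQ|/existsP[p1 /existsP[q1 /and5P[p1Q q1Q pq wp wq]]]] qQ wqn.
  by apply: step_incl; apply: cQ.
have wp1 : p1 != w by apply/eqP=> e; move: wp; rewrite e iH.
have wq1 : q1 != w by apply/eqP=> e; move: wq; rewrite e iH.
case: (eqVneq q p1) => [->|qp1]; first by apply: step_incl.
case: (eqVneq q q1) => [->|qq1]; first by apply: step_incl.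
apply: (step_intro (a:=p1) (b:=q1)) => //; try by rewrite eq_sym.
- by apply: cQ.
- by apply: cQ.
- by apply: cQ.
Qed.

Lemma clique_ext H Q S : (forall x, H x x = false) -> (forall x y, H x y = H y x) ->
  clique H Q -> (forall w, w \in S -> attached H Q w) -> clique (k4_step H) S ->
  clique (k4_step H) (Q :|: S).
Proof.
move=> iH sH cQ aS cS p q; rewrite !inE => /orP[pQ|pS] /orP[qQ|qS] pq.
- by apply: step_incl; apply: cQ.
- rewrite step_sym //; apply: (attach_join (Q:=Q)) => //; first by apply: aS.
  by rewrite eq_sym.
- by apply: (attach_join (Q:=Q)) => //; apply: aS.
- by apply: cS.
Qed.

Lemma K_clique H x y a b : (forall x y, H x y = H y x) ->
  H x y -> H x a -> H x b -> H y a -> H y b -> H a b -> clique H [set x; y; a; b].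
Proof.
move=> sH h1 h2 h3 h4 h5 h6 p q; rewrite !inE.
by move=> /orP[/orP[/orP[]|]|] /eqP-> /orP[/orP[/orP[]|]|] /eqP->;
  rewrite ?eqxx //= => _; rewrite sH.
Qed.

Variable G : rel 'I_n.
Hypothesis sG : simple_graph G.
Notation P t := (k4_process G t).

Lemma proc_prop t : (forall x y, P t x y = P t y x) /\ (forall x, P t x x = false).
Proof.
elim: t => [|t [sH iH]]; first by case: sG.
by split; [apply: step_sym | apply: step_irr].
Qed.

Lemma grow t x y : P t.+1 x y -> ~~ P t x y ->
  exists Q, [/\ clique (P t.+1) Q, t + 4 <= #|Q|, attached (P t.+1) Q x
                & attached (P t.+1) Q y].
Proof.
elim: t x y => [|t IH] x y.
  move=> /step_elim[h|[xy [a [b [[h1 h2 h3 h4 h5] [h6 h7 h8 h9 h10]]]]]];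
    first by move=> nh; case/negP: nh; exact: h.
  move=> _.
  case: sG => sH iH.
  exists [set x; y; a; b]; split.
  - apply: K_clique; first by apply: step_sym.
    + by apply: (step_intro (a:=a) (b:=b)).
    + exact: step_incl h6.
    + exact: step_incl h7.
    + exact: step_incl h8.
    + exact: step_incl h9.
    + exact: step_incl h10.
  - have -> : [set x; y; a; b] = x |: (y |: (a |: [set b])).
      by apply/setP=> z; rewrite !inE !orbA.
    rewrite !cardsU1 cards1 !inE.
    by rewrite (negbTE xy) (eq_sym x a) (negbTE h1) (eq_sym x b) (negbTE h3)
      (eq_sym y a) (negbTE h2) (eq_sym y b) (negbTE h4) (negbTE h5).
  - by rewrite /attached !inE eqxx.
  - by rewrite /attached !inE eqxx orbT.
have [sH iH] := proc_prop t.+1.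
have [sH0 iH0] := proc_prop t.
move=> Hxy nxy.
case/step_elim: (Hxy) => [h|[xy [a [b [[h1 h2 h3 h4 h5] [h6 h7 h8 h9 h10]]]]]];
  first by case/negP: nxy; exact: h.
set K := [set x; y; a; b].
have xK : x \in K by rewrite !inE eqxx.
have yK : y \in K by rewrite !inE eqxx !orbT.
have aK : a \in K by rewrite !inE eqxx !orbT.
have bK : b \in K by rewrite !inE eqxx !orbT.
have [u [v [Huv nHuv uK vK]]] : exists u v,
    [/\ P t.+1 u v, ~~ P t u v, u \in K & v \in K].
  have : ~~ [&& P t x a, P t x b, P t y a, P t y b & P t a b].
    apply: contra nxy => /and5P[g1 g2 g3 g4 g5].
    by apply: (step_intro (a:=a) (b:=b)).
  rewrite !negb_and => /orP[g|/orP[g|/orP[g|/orP[g|g]]]].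
  - by exists x, a.
  - by exists x, b.
  - by exists y, a.
  - by exists y, b.
  - by exists a, b.
have uv : u != v by apply/eqP=> e; move: Huv; rewrite e iH.
have [Q [cQ szQ auQ avQ]] := IH u v Huv nHuv.
have cK : clique (P t.+2) K.
  apply: K_clique; first by apply: step_sym.
  + exact: Hxy.
  + exact: step_incl h6.
  + exact: step_incl h7.
  + exact: step_incl h8.
  + exact: step_incl h9.
  + exact: step_incl h10.
have adjA : forall z w, z \in [set a; b] -> w \in K -> w != z -> P t.+1 z w.
  move=> z w; rewrite !inE => /orP[]/eqP-> /orP[/orP[/orP[]|]|]/eqP-> ne;
    first [done | by rewrite sH | by rewrite eqxx in ne].
set S := [set w in K | attached (P t.+1) Q w].
have SK : forall w, w \in S -> w \in K by move=> w; rewrite inE => /andP[].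
have uS : u \in S by rewrite inE uK auQ.
have vS : v \in S by rewrite inE vK avQ.
have [w wS wQ] : exists2 w, w \in S & w \notin Q.
  case: (boolP (u \in Q)) => uQ; last by exists u.
  case: (boolP (v \in Q)) => vQ; last by exists v.
  have attz : forall z, z \in [set a; b] -> z \notin Q -> z \in S.
    move=> z zab zQ; rewrite inE; apply/andP; split.
      by move: zab; rewrite !inE => /orP[]/eqP->; rewrite eqxx !orbT.
    apply: (attachedI (p:=u) (q:=v)) => //; apply: adjA => //;
      apply/eqP=> e; move: zQ; by rewrite -e ?uQ ?vQ.
  case: (boolP (a \in Q)) => aQ; last by exists a => //; apply: attz; rewrite ?inE ?eqxx.
  case: (boolP (b \in Q)) => bQ; last by exists b => //; apply: attz; rewrite ?inE ?eqxx ?orbT.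
  case: (boolP (x \in Q)) => xQ.
    case: (boolP (y \in Q)) => yQ.
      by case/negP: nxy; apply: cQ.
    exists y; last exact: yQ.
    rewrite inE yK andTb; exact: (attachedI aQ bQ h5 h8 h9).
  exists x; last exact: xQ.
  rewrite inE xK andTb; exact: (attachedI aQ bQ h5 h6 h7).
exists (Q :|: S); split.
- apply: clique_ext; [exact: iH|exact: sH|exact: cQ| |].
  + by move=> z; rewrite inE => /andP[].
  + by move=> p q pS qS; apply: cK; apply: SK.
- have sub : w |: Q \subset Q :|: S.
    apply/subsetP=> z; rewrite in_setU1 in_setU => /orP[/eqP->|->];
      [by rewrite wS orbT | by []].
  have := subset_leq_card sub; rewrite cardsU1 wQ add1n => hc.
  by apply: leq_trans hc; rewrite addSn ltnS.
- have uQ' : u \in Q :|: S by rewrite in_setU uS orbT.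
  have vQ' : v \in Q :|: S by rewrite in_setU vS orbT.
  case: (boolP (x \in Q :|: S)) => xQ'; first by rewrite /attached xQ'.
  apply: (attachedI uQ' vQ' uv); (apply: cK; [exact: xK|first [exact: uK|exact: vK]|]); apply/eqP=> e; move: xQ';
    by rewrite e ?uQ' ?vQ'.
- have uQ' : u \in Q :|: S by rewrite in_setU uS orbT.
  have vQ' : v \in Q :|: S by rewrite in_setU vS orbT.
  case: (boolP (y \in Q :|: S)) => yQ'; first by rewrite /attached yQ'.
  apply: (attachedI uQ' vQ' uv); (apply: cK; [exact: yK|first [exact: uK|exact: vK]|]); apply/eqP=> e; move: yQ';
    by rewrite e ?uQ' ?vQ'.
Qed.

Lemma G_incl t x y : G x y -> P t x y.
Proof. by elim: t => [//|t IH] /IH; apply: step_incl. Qed.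

End K4.

Theorem theorem2 (n : nat) (G : rel 'I_n) :
  3 <= n -> simple_graph G ->
  exists t, t <= n - 3 /\ k4_saturated_at G t.
Proof.
move=> n3 sG; exists (n - 3); split => //.
set t := n - 3.
have stop : forall x y, k4_process G t.+1 x y -> k4_process G t x y.
  move=> x y h; apply/negPn/negP => nh.
  have [Q [_ szQ _ _]] := grow sG h nh.
  have hQ := subset_leq_card (subsetT Q); rewrite cardsT card_ord in hQ.
  move: szQ hQ; rewrite /t; clear; move: #|Q| => m; lia.
have all_s : forall s x y, k4_process G s x y -> k4_process G t x y.
  elim=> [|s IH] x y; first by apply: G_incl.
  by move=> /(step_mono IH); apply: stop.
move=> x y; split; first by exists t.
by case=> s; apply: all_s.
Qed.
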